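(* Let $f,f':\mathcal D_n^+\to\mathcal D_n^+$ be stable mappings (indexed by $n$) with fixed points $\Delta,\Delta'\in\mathcal D_n^+$, $\Delta=f(\Delta)$ and $\Delta'=f'(\Delta')$. Assume $\Delta'\sim O(1)$, that $f$ is contracting for the stable semi-metric around $\Delta'$ with parameter $\lambda<1$ (i.e. $d_s(f(\Delta''),f(\Delta'))\le\lambda\,d_s(\Delta'',\Delta')$ for all $\Delta''\in\mathcal D_n^+$), and that $$1-\lambda-\left\|\sqrt{\frac{|f(\Delta')-f'(\Delta')|}{\Delta'}}\right\|\ge O(1).$$ Then there exists a constant $K\le O(1)$ such that $\|\Delta-\Delta'\|\le K\,\|f(\Delta')-f'(\Delta')\|$.
   Context: All objects are indexed by $n$; $a\le O(b)$ means $a_n\le Kb_n$ for some $K$ independent of $n$, $a\ge O(b)$ means $a_n\ge\kappa b_n$ for some $\kappa>0$ independent of $n$. For $\Delta\in\mathcal D_n^+$ (diagonal $n\times n$ matrices with positive diagonal entries), $\Delta\sim O(1)$ means $\|\Delta\|\le O(1)$ and $\|\Delta^{-1}\|\le O(1)$; $\|\cdot\|$ is the spectral norm, operations on diagonal matrices are entrywise. $d_s(\Delta,\Delta')=\max_i\frac{|\Delta_i-\Delta'_i|}{\sqrt{\Delta_i\Delta'_i}}$; $f$ is stable if $d_s(f(\Delta),f(\Delta'))\le d_s(\Delta,\Delta')$ for all $\Delta,\Delta'$. *)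

(* Defs.v *)
From HB Require Import structures.
From mathcomp Require Import all_boot all_order all_algebra.
From mathcomp Require Import reals.
Set Implicit Arguments. Unset Strict Implicit. Unset Printing Implicit Defensive.
Import Order.TTheory GRing.Theory Num.Theory.
Local Open Scope ring_scope.

(* A diagonal n x n matrix is represented by its diagonal 'I_n -> R;
   all operations on diagonal matrices are entrywise. *)
Definition diag_pos (R : realType) (n : nat) (d : 'I_n -> R) : Prop :=
  forall i, 0 < d i.

(* Spectral norm of a diagonal matrix = max_i |d_i| (0 for n = 0). *)
Definition dnorm (R : realType) (n : nat) (d : 'I_n -> R) : R :=
  \big[Num.max/0]_(i < n) `|d i|.

Definition ds (R : realType) (n : nat) (d d' : 'I_n -> R) : R :=
  \big[Num.max/0]_(i < n) (`|d i - d' i| / Num.sqrt (d i * d' i)).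

Definition maps_pos (R : realType) (n : nat) (f : ('I_n -> R) -> ('I_n -> R)) : Prop :=
  forall d, diag_pos d -> diag_pos (f d).

Definition stable (R : realType) (n : nat) (f : ('I_n -> R) -> ('I_n -> R)) : Prop :=
  forall d d', diag_pos d -> diag_pos d' -> ds (f d) (f d') <= ds d d'.

(* Main.v *)
From HB Require Import structures.
Require Import Defs.
From mathcomp Require Import all_boot all_order all_algebra.
From mathcomp Require Import reals.
From mathcomp Require Import ring lra.
Import Order.TTheory GRing.Theory Num.Theory.
Set Implicit Arguments. Unset Strict Implicit.
Local Open Scope ring_scope.

Lemma tri (R : realType) (p q r s M : R) : 0 < p -> 0 < q -> 0 < r -> 0 < s ->
  p * q = 1 -> r * s = 1 -> r <= M -> s <= M ->
  `|p * r - q * s| <= `|p - q| * M + `|r - s|.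
Proof.
move=> hp hq hr hs hpq hrs hrM hsM.
have e1 : p * r - q * s = (p - q) * r + q * (r - s) by ring.
have e2 : p * r - q * s = (p - q) * s + p * (r - s) by ring.
have [h1|h1] := lerP q p; have [h2|h2] := lerP s r.
- have hq1 : q <= 1.
    have : q * q <= p * q by apply: ler_wpM2r; lra.
    nra.
  have a1 : (p - q) * r <= (p - q) * M by nra.
  have a2 : q * (r - s) <= r - s by nra.
  have b1 : 0 <= (p - q) * r by apply: mulr_ge0; lra.
  have b2 : 0 <= q * (r - s) by apply: mulr_ge0; lra.
  rewrite (ger0_norm (x := p*r - q*s)); last lra.
  lra.
- have hq1 : q <= 1.
    have : q * q <= p * q by apply: ler_wpM2r; lra.
    nra.
  have a1 : (p - q) * s <= (p - q) * M by apply: ler_wpM2l; lra.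
  have a2 : 0 <= (p - q) * r by apply: mulr_ge0; lra.
  have a3 : p * (r - s) <= 0 by apply: mulr_ge0_le0; lra.
  have a4 : q * (s - r) <= s - r by rewrite -{2}(mul1r (s - r)); apply: ler_wpM2r; lra.
  case: (lerP 0 (p*r - q*s)) => h3.
  + rewrite ger0_norm //. nra.
  + rewrite ltr0_norm //. nra.
- have hq1 : p <= 1.
    have : p * p <= p * q by apply: ler_wpM2l; lra.
    nra.
  have a1 : (q - p) * r <= (q - p) * M by apply: ler_wpM2l; lra.
  have a2 : 0 <= (q - p) * s by apply: mulr_ge0; lra.
  have a3 : 0 <= q * (r - s) by apply: mulr_ge0; lra.
  have a4 : p * (r - s) <= r - s by rewrite -{2}(mul1r (r - s)); apply: ler_wpM2r; lra.
  case: (lerP 0 (p*r - q*s)) => h3.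
  + rewrite ger0_norm //. nra.
  + rewrite ltr0_norm //. nra.
- have hq1 : p <= 1.
    have : p * p <= p * q by apply: ler_wpM2l; lra.
    nra.
  have a1 : (q - p) * s <= (q - p) * M by apply: ler_wpM2l; lra.
  have a2 : p * (s - r) <= s - r by rewrite -{2}(mul1r (s - r)); apply: ler_wpM2r; lra.
  have b1 : 0 <= (q - p) * s by apply: mulr_ge0; lra.
  have b2 : 0 <= p * (s - r) by apply: mulr_ge0; lra.
  rewrite (ler0_norm (x := p*r - q*s)); last lra.
  lra.
Qed.

Definition ds1 (R : realType) (a b : R) := `|a - b| / Num.sqrt (a * b).
Arguments ds1 {R}.

Lemma ds1E (R : realType) (al ga : R) : 0 < al -> 0 < ga ->
  ds1 (al ^+ 2) (ga ^+ 2) = `|al / ga - ga / al|.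
Proof.
move=> ha hg; rewrite /ds1 -exprMn sqrtr_sqr.
rewrite (gtr0_norm (x := al * ga)); last by apply: mulr_gt0.
rewrite -[al * ga](gtr0_norm (mulr_gt0 ha hg)) -normf_div; congr `|_|.
field; apply/andP; split; apply: lt0r_neq0 => //.
Qed.

Lemma cond (R : realType) (v s t lam kap : R) : 0 < v -> v * s = 1 -> 0 <= t ->
  t ^+ 2 = `|v ^+ 2 - 1| -> 0 <= lam -> 0 < kap -> lam + t + kap <= 1 ->
  lam * v <= 1 - kap /\ lam * s <= 1 - kap.
Proof.
move=> hv hvs ht ht2 hl hk hsum.
have hs : 0 < s by nra.
have [h1|h1] := lerP 1 v.
- rewrite ger0_norm in ht2; last by nra.
  have hv1 : v <= 1 + t by nra.
  have hs1 : s <= 1 by nra.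
  split; nra.
- rewrite ler0_norm in ht2; last by nra.
  have ht1 : t <= 1 by nra.
  have htt : t ^+ 2 <= t by nra.
  have h3 : 1 - kap - t <= (1 - kap) * v by nra.
  split; nra.
Qed.

Lemma tsq (R : realType) (be ga : R) : 0 < be -> 0 < ga ->
  Num.sqrt (`|be ^+ 2 - ga ^+ 2| / ga ^+ 2) ^+ 2 = `|(be / ga) ^+ 2 - 1|.
Proof.
move=> hb hg; rewrite sqr_sqrtr; last by apply: divr_ge0 => //; apply: exprn_ge0; apply: ltW.
rewrite -[X in _ / X](gtr0_norm (exprn_gt0 2 hg)) -normf_div; congr `|_|.
field; apply: lt0r_neq0 => //.
Qed.

Lemma coordA (R : realType) (al be ga lam kap x y : R) :
  0 < al -> 0 < be -> 0 < ga -> 0 <= lam -> 0 < kap -> 0 <= x ->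
  lam + Num.sqrt (`|be ^+ 2 - ga ^+ 2| / ga ^+ 2) + kap <= 1 ->
  ds1 (al ^+ 2) (be ^+ 2) <= lam * x -> ds1 (be ^+ 2) (ga ^+ 2) <= y ->
  ds1 (al ^+ 2) (ga ^+ 2) <= (1 - kap) * x + y.
Proof.
move=> ha hb hg hl hk hx hsum.
have ht2 := tsq hb hg.
have ht := sqrtr_ge0 (`|be ^+ 2 - ga ^+ 2| / ga ^+ 2).
move: hsum ht ht2; set t := Num.sqrt _ => hsum ht ht2.
rewrite !ds1E // => h1 h2.
have e1 : al / ga = (al / be) * (be / ga) by field; apply/andP; split; apply: lt0r_neq0.
have e2 : ga / al = (be / al) * (ga / be) by field; apply/andP; split; apply: lt0r_neq0.
have hp : 0 < al / be by apply: divr_gt0.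
have hq : 0 < be / al by apply: divr_gt0.
have hr : 0 < be / ga by apply: divr_gt0.
have hs : 0 < ga / be by apply: divr_gt0.
have hpq : (al / be) * (be / al) = 1 by field; apply/andP; split; apply: lt0r_neq0.
have hrs : (be / ga) * (ga / be) = 1 by field; apply/andP; split; apply: lt0r_neq0.
have [c1 c2] := cond hr hrs ht ht2 hl hk hsum.
rewrite e1 e2.
have := tri hp hq hr hs hpq hrs (M := Num.max (be / ga) (ga / be)) ltac:(by rewrite le_max lexx) ltac:(by rewrite le_max lexx orbT).
move: h1 h2.
set P := `|_ - _|; set Q := `|_ - _|; set S := `| _ - _|.
set M := Num.max _ _ => h1 h2 h3.
have hM : lam * M <= 1 - kap by rewrite /M; case: (leP (be / ga) (ga / be)).
have hM0 : 0 <= M by rewrite /M le_max; apply/orP; left; apply: ltW.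
have hP0 : 0 <= P by apply: normr_ge0.
nra.
Qed.

Lemma coordB (R : realType) (be ga lam kap Kc E : R) :
  0 < be -> 0 < ga -> 0 <= lam -> 0 < kap ->
  lam + Num.sqrt (`|be ^+ 2 - ga ^+ 2| / ga ^+ 2) + kap <= 1 ->
  `|be ^+ 2 - ga ^+ 2| <= E -> (ga ^+ 2)^-1 <= Kc ->
  kap * ds1 (be ^+ 2) (ga ^+ 2) <= E * Kc /\ kap * ds1 (be ^+ 2) (ga ^+ 2) <= 1.
Proof.
move=> hb hg hl hk hsum hE hK.
have ht2 := tsq hb hg.
have ht := sqrtr_ge0 (`|be ^+ 2 - ga ^+ 2| / ga ^+ 2).
have et : Num.sqrt (`|be ^+ 2 - ga ^+ 2| / ga ^+ 2) ^+ 2 = `|be ^+ 2 - ga ^+ 2| * (ga ^+ 2)^-1.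
  by rewrite sqr_sqrtr //; apply: divr_ge0 => //; apply: exprn_ge0; apply: ltW.
move: hsum ht ht2 et; set t := Num.sqrt _ => hsum ht ht2 et.
rewrite !ds1E //.
have hr : 0 < be / ga by apply: divr_gt0.
have hs : 0 < ga / be by apply: divr_gt0.
have hrs : (be / ga) * (ga / be) = 1 by field; apply/andP; split; apply: lt0r_neq0.
have e3 : be / ga - ga / be = ((be / ga) ^+ 2 - 1) * (ga / be).
  by field; apply/andP; split; apply: lt0r_neq0.
rewrite e3 normrM (gtr0_norm hs) -ht2.
move: ht2 hrs hr hs; set r := be / ga; set s := ga / be => ht2 hrs hr hs.
have ht1 : t <= 1 - kap by lra.
have hks : kap * s <= 1.
  have [h1|h1] := lerP 1 r.
  - have : s <= 1 by nra.
    have : kap <= 1 by lra.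
    nra.
  - rewrite ler0_norm in ht2; last by nra.
    have : t ^+ 2 <= (1 - kap) ^+ 2 by rewrite lerXn2r // ?nnegrE; lra.
    have : (1 - kap) ^+ 2 <= 1 - kap by nra.
    have : kap <= r by nra.
    nra.
have htt : t ^+ 2 <= 1 by nra.
have hE2 : t ^+ 2 <= E * Kc.
  rewrite et; apply: ler_pM => //.
  by rewrite invr_ge0; apply: exprn_ge0; apply: ltW.
have ht20 : 0 <= t ^+ 2 by apply: exprn_ge0.
split; nra.
Qed.

Lemma coordC (R : realType) (al ga X Kc : R) :
  0 < al -> 0 < ga -> ds1 (al ^+ 2) (ga ^+ 2) <= X -> ga ^+ 2 <= Kc ->
  `|al ^+ 2 - ga ^+ 2| <= X * (1 + X) * Kc.
Proof.
move=> ha hg; rewrite ds1E // => hX hK.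
have hu : 0 < al / ga by apply: divr_gt0.
have hw : 0 < ga / al by apply: divr_gt0.
have huw : (al / ga) * (ga / al) = 1 by field; apply/andP; split; apply: lt0r_neq0.
have e : al ^+ 2 - ga ^+ 2 = (al / ga - ga / al) * (al / ga) * ga ^+ 2.
  by field; apply/andP; split; apply: lt0r_neq0.
rewrite e (normrM _ (ga ^+ 2)) (normrM _ (al / ga)) (ger0_norm (ltW hu)) (ger0_norm (exprn_ge0 2 (ltW hg))).
move: hX huw hu hw; set u := al / ga; set w := ga / al => hX huw hu hw.
have hX0 : 0 <= X by apply: le_trans hX; apply: normr_ge0.
have hu1 : u <= 1 + X.
  have [h1|h1] := lerP 1 u.
  - have : w <= 1 by nra.
    rewrite ger0_norm in hX; last by nra.
    lra.
  - lra.
have h1 : `|u - w| * u <= X * (1 + X).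
  by apply: ler_pM; [exact: normr_ge0 | exact: ltW | exact: hX | exact: hu1].
apply: ler_pM => //.
- by apply: mulr_ge0; [apply: normr_ge0|apply: ltW].
- by apply: exprn_ge0; apply: ltW.
Qed.

Lemma bmax_ge (R : realType) n (F : 'I_n -> R) i : F i <= \big[Num.max/0]_(j < n) F j.
Proof. exact: le_bigmax. Qed.

Lemma bmax_le (R : realType) n (F : 'I_n -> R) B : 0 <= B -> (forall i, F i <= B) ->
  \big[Num.max/0]_(j < n) F j <= B.
Proof. by move=> h0 h; apply: bigmax_le. Qed.

Lemma bmax_ge0 (R : realType) n (F : 'I_n -> R) : 0 <= \big[Num.max/0]_(j < n) F j.
Proof. exact: bigmax_ge_id. Qed.

Lemma sq_pos (R : realType) (a : R) : 0 < a -> a = Num.sqrt a ^+ 2.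
Proof. by move=> ha; rewrite sqr_sqrtr // ltW. Qed.

Lemma coordA' (R : realType) (a b c lam kap x y : R) :
  0 < a -> 0 < b -> 0 < c -> 0 <= lam -> 0 < kap -> 0 <= x ->
  lam + Num.sqrt (`|b - c| / c) + kap <= 1 ->
  ds1 a b <= lam * x -> ds1 b c <= y -> ds1 a c <= (1 - kap) * x + y.
Proof.
move=> ha hb hc; rewrite (sq_pos ha) (sq_pos hb) (sq_pos hc).
by apply: coordA; rewrite sqrtr_gt0.
Qed.

Lemma coordB' (R : realType) (b c lam kap Kc E : R) :
  0 < b -> 0 < c -> 0 <= lam -> 0 < kap ->
  lam + Num.sqrt (`|b - c| / c) + kap <= 1 ->
  `|b - c| <= E -> c^-1 <= Kc ->
  kap * ds1 b c <= E * Kc /\ kap * ds1 b c <= 1.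
Proof.
move=> hb hc; rewrite (sq_pos hb) (sq_pos hc).
by apply: coordB; rewrite sqrtr_gt0.
Qed.

Lemma coordC' (R : realType) (a c X Kc : R) :
  0 < a -> 0 < c -> ds1 a c <= X -> c <= Kc -> `|a - c| <= X * (1 + X) * Kc.
Proof.
move=> ha hc; rewrite (sq_pos ha) (sq_pos hc).
by apply: coordC; rewrite sqrtr_gt0.
Qed.

Unset Implicit Arguments.

Theorem theorem6 (R : realType)
  (f f' : forall n : nat, ('I_n -> R) -> ('I_n -> R))
  (D D' : forall n : nat, 'I_n -> R) (lambda : nat -> R) :
  (forall n, maps_pos (f n) /\ maps_pos (f' n)) ->
  (forall n, stable (f n) /\ stable (f' n)) ->
  (forall n, diag_pos (D n) /\ diag_pos (D' n)) ->
  (forall n, D n = f n (D n)) ->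
  (forall n, D' n = f' n (D' n)) ->
  (* Delta' ~ O(1) *)
  (exists K : R, forall n,
      dnorm (D' n) <= K /\ dnorm (fun i => (D' n i)^-1) <= K) ->
  (* f contracting around Delta' with parameter lambda < 1 *)
  (forall n, lambda n < 1) ->
  (forall n (D'' : 'I_n -> R), diag_pos D'' ->
      ds (f n D'') (f n (D' n)) <= lambda n * ds D'' (D' n)) ->
  (* 1 - lambda - || sqrt(|f(D') - f'(D')| / D') || >= O(1) *)
  (exists kappa : R, 0 < kappa /\ forall n,
      kappa <= 1 - lambda n
               - dnorm (fun i => Num.sqrt (`|f n (D' n) i - f' n (D' n) i| / D' n i))) ->
  exists K : R, forall n,
    dnorm (fun i => D n i - D' n i) <= K * dnorm (fun i => f n (D' n) i - f' n (D' n) i).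
Proof.
move=> hpos hstab hDpos hfix hfix' [K hK] hlam hcontr [kap [hk hkap]].
have K0 : 0 <= K by have [h _] := hK 0%N; apply: le_trans h; apply: bmax_ge0.
set A := kap^-1.
have hA : 0 < A by rewrite invr_gt0.
have hAk : A * kap = 1 by rewrite mulVf // lt0r_neq0.
exists (A * A * K * (1 + A * A) * K) => n.
have [hD hD'] := hDpos n.
have hfD' : diag_pos (f n (D' n)) by have [h _] := hpos n; apply: h.
set a := D n; set c := D' n; set b := f n (D' n).
have -> : (fun i => f n c i - f' n c i) = (fun i => b i - c i).
  by rewrite /b /c -(hfix' n).
set E := dnorm (fun i => b i - c i).
have E0 : 0 <= E by apply: bmax_ge0.
have [hKc hKc'] := hK n.
have hci : forall i, c i <= K.
  move=> i; apply: le_trans hKc; apply: le_trans (bmax_ge _ i).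
  by rewrite ger0_norm // ltW.
have hci' : forall i, (c i)^-1 <= K.
  move=> i; apply: le_trans hKc'; apply: le_trans (bmax_ge _ i).
  by rewrite ger0_norm // invr_ge0 ltW.
have hbi : forall i, `|b i - c i| <= E by move=> i; apply: (bmax_ge (fun i => `|b i - c i|) i).
set x := ds a c.
set y := ds b c.
have hx0 : 0 <= x by apply: bmax_ge0.
have hy0 : 0 <= y by apply: bmax_ge0.
have hXi : forall i, ds1 (a i) (c i) <= x by move=> i; apply: (bmax_ge (fun i => ds1 (a i) (c i)) i).
have hYi : forall i, ds1 (b i) (c i) <= y by move=> i; apply: (bmax_ge (fun i => ds1 (b i) (c i)) i).
have hc1 : ds a b <= lambda n * x.
  have := hcontr n a hD; rewrite -(hfix n) //.
have hAi : forall i, ds1 (a i) (b i) <= lambda n * x.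
  by move=> i; apply: le_trans hc1; apply: (bmax_ge (fun i => ds1 (a i) (b i)) i).
have hsq : forall i, lambda n + Num.sqrt (`|b i - c i| / c i) + kap <= 1.
  move=> i; have := hkap n; rewrite -/c -/b.
  have : Num.sqrt (`|b i - c i| / c i) <=
      dnorm (fun i => Num.sqrt (`|b i - c i| / c i)).
    apply: le_trans (bmax_ge _ i); by rewrite (ger0_norm (sqrtr_ge0 _)).
  have -> : (fun i => Num.sqrt (`|f n c i - f' n c i| / c i)) =
            (fun i => Num.sqrt (`|b i - c i| / c i)) by rewrite /b /c -(hfix' n).
  lra.
have hxb : x <= A * A * (E * K) /\ x <= A * A.
  have [hl|hl] := ltP (lambda n) 0.
  - have : 0 <= lambda n * x by apply: le_trans hc1; apply: bmax_ge0.
    move=> hlx.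
    have -> : x = 0 by apply: le_anti; rewrite hx0 andbT; nra.
    split; [apply: mulr_ge0; [apply: mulr_ge0; apply: ltW | apply: mulr_ge0]|
            apply: mulr_ge0; apply: ltW] => //.
  - have hk1 : kap <= 1.
      move: (hkap n); set dd := dnorm _ => hdd.
      have : 0 <= dd by apply: bmax_ge0.
      lra.
    have hyb : y <= A * (E * K) /\ y <= A * 1.
      have hEK : 0 <= E * K by apply: mulr_ge0.
      split; apply: bmax_le; rewrite ?mulr1 ?(ltW hA) ?mulr_ge0 ?(ltW hA) //;
        move=> i; rewrite -[X in X <= _]/(ds1 (b i) (c i)); have [h1 h2] := coordB' (hfD' i) (hD' i) hl hk (hsq i) (hbi i) (hci' i);
        rewrite -[ds1 _ _]mul1r -hAk -mulrA.
      + by apply: ler_wpM2l => //; apply: ltW.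
      + by rewrite -[X in _ <= X]mulr1; apply: ler_wpM2l => //; apply: ltW.
    have hxy : x <= (1 - kap) * x + y.
      apply: bmax_le; first by nra.
      move=> i; apply: coordA' (hD i) (hfD' i) (hD' i) hl hk hx0 (hsq i) (hAi i) (hYi i).
    have hkx : kap * x <= y by lra.
    have e1 : x = A * (kap * x).
      by rewrite mulrA hAk mul1r.
    have hx3 : x <= A * y by rewrite e1; apply: ler_wpM2l => //; exact: (ltW hA).
    have [hy1 hy2] := hyb.
    split.
    + apply: (le_trans hx3); rewrite -mulrA; apply: ler_wpM2l => //; exact: (ltW hA).
    + apply: (le_trans hx3); rewrite -[X in _ <= X]mulr1 -mulrA; apply: ler_wpM2l => //; exact: (ltW hA).
have [hx1 hx2] := hxb.
apply: bmax_le.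
  apply: mulr_ge0 => //; apply: mulr_ge0 => //; apply: mulr_ge0 => //.
  apply: mulr_ge0 => //; apply: mulr_ge0; apply: ltW => //.
  apply: addr_ge0 => //; apply: mulr_ge0; apply: ltW => //.
move=> i.
apply: le_trans (coordC' (hD i) (hD' i) (hXi i) (hci i)) _.
have h1 : x * (1 + x) <= A * A * (E * K) * (1 + A * A).
  apply: ler_pM => //; first by lra.
  lra.
have : x * (1 + x) * K <= A * A * (E * K) * (1 + A * A) * K by apply: ler_wpM2r.
move=> h; apply: le_trans h _.
by rewrite [X in _ <= X](_ : _ = A * A * (E * K) * (1 + A * A) * K) //; ring.
Qed.
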